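(* Let $R$ be a left coherent ring. For each left ideal $I\subseteq R$ choose a short exact sequence of left $R$-modules $0\to R/I\to A_I\to C_I\to 0$ with $A_I$ FP-injective and $C_I$ FP-projective. Then an FP-injective left $R$-module $A$ is injective if and only if $\mathrm{Ext}^1_R(A_I,A)=0$ for all left ideals $I\subseteq R$. In other words, in the exact category of FP-injective modules (with the exact structure inherited from $R$-Mod), the cotorsion pair (FP-injective modules, injective modules) is cogenerated by the set $\{A_I\}_{I\subseteq R}$.
   Context: A left $R$-module $M$ is FP-injective if $\mathrm{Ext}^1_R(F,M)=0$ for every finitely presented left $R$-module $F$. A module $C$ is FP-projective if $\mathrm{Ext}^1_R(C,N)=0$ for every FP-injective module $N$. A ring is left coherent if every finitely generated left ideal is finitely presented. *)

(* Defs.v *)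
(* Left R-modules are MathComp's [lmodType R]
   (left scalar action [*:]) over an arbitrary (possibly non-commutative)
   ring [R : pzRingType]. *)
From HB Require Import structures.
From mathcomp Require Import all_boot all_order all_algebra.
Set Implicit Arguments. Unset Strict Implicit. Unset Printing Implicit Defensive.
Import GRing.Theory.
Local Open Scope ring_scope.

Section Modules.
Variable R : pzRingType.

Definition is_hom (M N : lmodType R) (f : M -> N) : Prop :=
  forall (a : R) (x y : M), f (a *: x + y) = a *: f x + f y.

Definition short_exact (M E C : lmodType R) (f : M -> E) (g : E -> C) : Prop :=
  [/\ is_hom f, is_hom g, injective f, (forall c, exists e, g e = c)
    & (forall e, g e = 0 <-> exists m, e = f m)].

(* Ext^1_R(C, M) = 0, via Yoneda: every extension of C by M splits. *)
Definition Ext1_zero (C M : lmodType R) : Prop :=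
  forall (E : lmodType R) (f : M -> E) (g : E -> C), short_exact f g ->
    exists s : C -> E, is_hom s /\ forall c, g (s c) = c.

Definition fin_presented_sub (V : lmodType R) (P : V -> Prop) : Prop :=
  exists (n : nat) (x : 'I_n -> V),
    (forall v, P v <-> exists r : 'I_n -> R, v = \sum_(i < n) r i *: x i) /\
    exists (k : nat) (rel : 'I_k -> 'I_n -> R),
      (forall j, \sum_(i < n) rel j i *: x i = 0) /\
      (forall r : 'I_n -> R, \sum_(i < n) r i *: x i = 0 ->
         exists s : 'I_k -> R, forall i, r i = \sum_(j < k) s j * rel j i).

Definition finitely_presented (F : lmodType R) : Prop :=
  fin_presented_sub (fun _ : F => True).

Definition FP_injective (M : lmodType R) : Prop :=
  forall F : lmodType R, finitely_presented F -> Ext1_zero F M.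

Definition FP_projective (C : lmodType R) : Prop :=
  forall N : lmodType R, FP_injective N -> Ext1_zero C N.

Definition injective_module (A : lmodType R) : Prop :=
  forall (X Y : lmodType R) (i : X -> Y) (f : X -> A),
    is_hom i -> injective i -> is_hom f ->
    exists h : Y -> A, is_hom h /\ forall x, h (i x) = f x.

Definition left_ideal (I : R -> Prop) : Prop :=
  [/\ I 0, (forall x y, I x -> I y -> I (x + y)) & (forall r x, I x -> I (r * x))].

Definition fin_gen_left_ideal (I : R -> Prop) : Prop :=
  exists (n : nat) (a : 'I_n -> R),
    forall v, I v <-> exists r : 'I_n -> R, v = \sum_(i < n) r i * a i.

Definition left_coherent : Prop :=
  forall I : R -> Prop, left_ideal I -> fin_gen_left_ideal I ->
    @fin_presented_sub R^o I.

(* Q is isomorphic to the cyclic module R/I: it has a generator q whose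
   annihilator is exactly I (first isomorphism theorem for r |-> r *: q). *)
Definition iso_quot (Q : lmodType R) (I : R -> Prop) : Prop :=
  exists q : Q, (forall r : R, r *: q = 0 <-> I r) /\
                (forall y : Q, exists r : R, y = r *: q).

End Modules.

(* Main.v *)
Require Import Defs.
From mathcomp Require Import all_boot all_order all_algebra.
From HB Require Import structures.
From mathcomp Require Import boolp classical_sets.
From mathcomp Require Import zify ring lra.
Set Implicit Arguments. Unset Strict Implicit. Unset Printing Implicit Defensive.
Import GRing.Theory Num.Theory.
Local Open Scope ring_scope.

Section Basics.
Variable R : pzRingType.

Definition submod (V : lmodType R) (S : V -> Prop) :=
  S 0 /\ forall a x y, S x -> S y -> S (a *: x + y).
Definition hom_on (V W : lmodType R) (S : V -> Prop) (h : V -> W) :=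
  forall a x y, S x -> S y -> h (a *: x + y) = a *: h x + h y.

Variables (V W : lmodType R).
Implicit Types (S : V -> Prop) (h : V -> W).

Lemma subm0 S : submod S -> S 0. Proof. by case. Qed.
Lemma submD S x y : submod S -> S x -> S y -> S (x + y).
Proof. by move=> [_ H] Sx Sy; have := H 1 x y Sx Sy; rewrite scale1r. Qed.
Lemma submZ S a x : submod S -> S x -> S (a *: x).
Proof. by move=> [S0 H] Sx; have := H a x 0 Sx S0; rewrite addr0. Qed.
Lemma submN S x : submod S -> S x -> S (- x).
Proof. by move=> HS Sx; rewrite -scaleN1r; apply: submZ. Qed.
Lemma submB S x y : submod S -> S x -> S y -> S (x - y).
Proof. by move=> HS Sx Sy; apply: submD => //; apply: submN. Qed.

Lemma homo0 S h : submod S -> hom_on S h -> h 0 = 0.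
Proof.
move=> [S0 _] H; have := H 1 0 0 S0 S0; rewrite !scale1r addr0 => E.
by apply: (addrI (h 0)); rewrite addr0 -E.
Qed.
Lemma homoD S h x y : submod S -> hom_on S h -> S x -> S y -> h (x + y) = h x + h y.
Proof. by move=> HS H Sx Sy; have := H 1 x y Sx Sy; rewrite !scale1r. Qed.
Lemma homoZ S h a x : submod S -> hom_on S h -> S x -> h (a *: x) = a *: h x.
Proof.
move=> HS H Sx; have := H a x 0 Sx (subm0 HS); rewrite !addr0 => ->.
by rewrite (homo0 HS H) addr0.
Qed.
Lemma homoN S h x : submod S -> hom_on S h -> S x -> h (- x) = - h x.
Proof. by move=> HS H Sx; rewrite -scaleN1r (homoZ _ HS H Sx) scaleN1r. Qed.
Lemma homoB S h x y : submod S -> hom_on S h -> S x -> S y -> h (x - y) = h x - h y.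
Proof.
move=> HS H Sx Sy; rewrite (homoD HS H Sx (submN HS Sy)) (homoN HS H Sy) //.
Qed.

Lemma submT : submod (fun _ : V => True). Proof. by []. Qed.
Lemma hom_onT h : is_hom h -> hom_on (fun _ => True) h.
Proof. by move=> H a x y _ _; apply: H. Qed.

Lemma hom0 h : is_hom h -> h 0 = 0.
Proof. by move=> H; apply: (homo0 submT (hom_onT H)). Qed.
Lemma homD h x y : is_hom h -> h (x + y) = h x + h y.
Proof. by move=> H; apply: (homoD submT (hom_onT H)). Qed.
Lemma homZ h a x : is_hom h -> h (a *: x) = a *: h x.
Proof. by move=> H; apply: (homoZ _ submT (hom_onT H)). Qed.
Lemma homN h x : is_hom h -> h (- x) = - h x.
Proof. by move=> H; apply: (homoN submT (hom_onT H)). Qed.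
Lemma homB h x y : is_hom h -> h (x - y) = h x - h y.
Proof. by move=> H; apply: (homoB submT (hom_onT H)). Qed.
Lemma homS h I r (P : pred I) (F : I -> V) : is_hom h ->
  h (\sum_(i <- r | P i) F i) = \sum_(i <- r | P i) h (F i).
Proof.
move=> H; elim/big_rec2: _ => [|i y1 y2 _ <-]; first exact: hom0.
by rewrite homD.
Qed.
Lemma homSZ h n (t : 'I_n -> R) (x : 'I_n -> V) : is_hom h ->
  h (\sum_i t i *: x i) = \sum_i t i *: h (x i).
Proof. by move=> H; rewrite homS //; apply: eq_bigr => i _; rewrite homZ. Qed.

End Basics.

Lemma hom_comp (R : pzRingType) (U V W : lmodType R) (f : U -> V) (g : V -> W) :
  is_hom f -> is_hom g -> is_hom (g \o f).
Proof. by move=> Hf Hg a x y /=; rewrite Hf Hg. Qed.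

Definition pick (T : Type) (x0 : T) (P : T -> Prop) : T :=
  match pselect (exists x, P x) with
  | left h => proj1_sig (cid h) | right _ => x0 end.
Lemma pickP T x0 (P : T -> Prop) : (exists x, P x) -> P (pick x0 P).
Proof.
rewrite /pick; case: pselect => [h _|h /h []]; by case: (cid h).
Qed.

Section SubMod.
Variables (R : pzRingType) (V : lmodType R) (S : V -> Prop) (HS : submod S).
Definition subT of submod S : Type := {x : V | S x}.
Local Notation ST := (subT HS).
HB.instance Definition _ := gen_eqMixin ST.
HB.instance Definition _ := gen_choiceMixin ST.
Definition sv (x : ST) : V := proj1_sig x.
Lemma svP (x : ST) : S (sv x). Proof. exact: proj2_sig x. Qed.
Lemma sv_inj (x y : ST) : sv x = sv y -> x = y.
Proof.
case: x => x Hx; case: y => y Hy /= E; subst y; congr exist; exact: Prop_irrelevance.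
Qed.
Definition mkS x (Hx : S x) : ST := exist _ x Hx.
Definition s_zero := mkS (subm0 HS).
Definition s_add (x y : ST) := mkS (submD HS (svP x) (svP y)).
Definition s_opp (x : ST) := mkS (submN HS (svP x)).
Definition s_scale a (x : ST) := mkS (submZ a HS (svP x)).
Fact s_addA : associative s_add.
Proof. by move=> x y z; apply: sv_inj; rewrite /= addrA. Qed.
Fact s_addC : commutative s_add.
Proof. by move=> x y; apply: sv_inj; rewrite /= addrC. Qed.
Fact s_add0 : left_id s_zero s_add.
Proof. by move=> x; apply: sv_inj; rewrite /= add0r. Qed.
Fact s_addN : left_inverse s_zero s_opp s_add.
Proof. by move=> x; apply: sv_inj; rewrite /= addNr. Qed.
HB.instance Definition _ := GRing.isZmodule.Build ST s_addA s_addC s_add0 s_addN.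
Fact s_scaleA a b v : s_scale a (s_scale b v) = s_scale (a * b) v.
Proof. by apply: sv_inj; rewrite /= scalerA. Qed.
Fact s_scale1 : left_id 1 s_scale.
Proof. by move=> x; apply: sv_inj; rewrite /= scale1r. Qed.
Fact s_scaleDr : right_distributive s_scale +%R.
Proof. by move=> a x y; apply: sv_inj; rewrite /= scalerDr. Qed.
Fact s_scaleDl v : {morph s_scale^~ v : a b / a + b}.
Proof. by move=> a b; apply: sv_inj; rewrite /= scalerDl. Qed.
HB.instance Definition _ := GRing.Zmodule_isLmodule.Build R ST
  s_scaleA s_scale1 s_scaleDr s_scaleDl.
Lemma sv_hom : is_hom sv. Proof. by []. Qed.
Lemma sv0 : sv 0 = 0. Proof. by []. Qed.
End SubMod.

Section Quot.
Variables (R : pzRingType) (V : lmodType R) (S : V -> Prop) (HS : submod S).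
Definition rep (v : V) : V := pick 0 (fun w => S (w - v)).
Lemma repP v : S (rep v - v).
Proof. apply: (@pickP _ 0 (fun w => S (w - v))); exists v; rewrite subrr; exact: subm0. Qed.
Lemma rep_eq v w : S (v - w) -> rep v = rep w.
Proof.
move=> Svw; rewrite /rep; f_equal; apply: funext => z; apply: propext; split.
- move=> H; have := submD HS H Svw; by rewrite addrA subrK.
- move=> H; have := submB HS H Svw; by rewrite opprB addrA subrK.
Qed.
Lemma rep_eqP v w : rep v = rep w -> S (v - w).
Proof.
move=> E; have := submB HS (repP w) (repP v); rewrite E.
by rewrite opprB addrC addrA subrK.
Qed.
Definition quotT of submod S : Type := {v : V | rep v = v}.
Local Notation QT := (quotT HS).
HB.instance Definition _ := gen_eqMixin QT.
HB.instance Definition _ := gen_choiceMixin QT.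
Definition qv (x : QT) : V := proj1_sig x.
Lemma qv_inj (x y : QT) : qv x = qv y -> x = y.
Proof.
case: x => x Hx; case: y => y Hy /= E; subst y; congr exist; exact: Prop_irrelevance.
Qed.
Lemma rep_idem v : rep (rep v) = rep v.
Proof. by apply: rep_eq; apply: repP. Qed.
Definition mkQ (v : V) : QT := exist _ (rep v) (rep_idem v).
Lemma mkQ_eq v w : mkQ v = mkQ w <-> S (v - w).
Proof.
split; first by move=> E; apply: rep_eqP; have := congr1 qv E.
by move=> H; apply: qv_inj; rewrite /=; apply: rep_eq.
Qed.
Lemma mkQ_qv x : mkQ (qv x) = x.
Proof. by apply: qv_inj; case: x => x Hx /=. Qed.
Lemma qv_S v : S (qv (mkQ v) - v). Proof. exact: repP. Qed.
Definition q_zero := mkQ 0.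
Definition q_add (x y : QT) := mkQ (qv x + qv y).
Definition q_opp (x : QT) := mkQ (- qv x).
Definition q_scale a (x : QT) := mkQ (a *: qv x).
Lemma q_addE v w : q_add (mkQ v) (mkQ w) = mkQ (v + w).
Proof.
apply/mkQ_eq; rewrite opprD addrACA; apply: submD => //; exact: repP.
Qed.
Lemma q_oppE v : q_opp (mkQ v) = mkQ (- v).
Proof. by apply/mkQ_eq; rewrite -opprD; apply: submN => //; exact: repP. Qed.
Lemma q_scaleE a v : q_scale a (mkQ v) = mkQ (a *: v).
Proof. by apply/mkQ_eq; rewrite -scalerBr; apply: submZ => //; exact: repP. Qed.
Fact q_addA : associative q_add.
Proof.
move=> x y z; rewrite -(mkQ_qv x) -(mkQ_qv y) -(mkQ_qv z).
by rewrite !q_addE addrA.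
Qed.
Fact q_addC : commutative q_add.
Proof. by move=> x y; rewrite -(mkQ_qv x) -(mkQ_qv y) !q_addE addrC. Qed.
Fact q_add0 : left_id q_zero q_add.
Proof. by move=> x; rewrite -(mkQ_qv x) /q_zero q_addE add0r. Qed.
Fact q_addN : left_inverse q_zero q_opp q_add.
Proof. by move=> x; rewrite -(mkQ_qv x) q_oppE q_addE addNr. Qed.
HB.instance Definition _ := GRing.isZmodule.Build QT q_addA q_addC q_add0 q_addN.
Lemma qaddE' (x y : QT) : x + y = q_add x y. Proof. by []. Qed.
Fact q_scaleA a b v : q_scale a (q_scale b v) = q_scale (a * b) v.
Proof. by rewrite -(mkQ_qv v) !q_scaleE scalerA. Qed.
Fact q_scale1 : left_id 1 q_scale.
Proof. by move=> x; rewrite -(mkQ_qv x) q_scaleE scale1r. Qed.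
Fact q_scaleDr : right_distributive q_scale +%R.
Proof.
move=> a x y; rewrite -(mkQ_qv x) -(mkQ_qv y).
rewrite !qaddE' q_addE !q_scaleE. by rewrite q_addE scalerDr.
Qed.
Fact q_scaleDl v : {morph q_scale^~ v : a b / a + b}.
Proof.
by move=> a b; rewrite -(mkQ_qv v) !qaddE' !q_scaleE q_addE scalerDl.
Qed.
HB.instance Definition _ := GRing.Zmodule_isLmodule.Build R QT
  q_scaleA q_scale1 q_scaleDr q_scaleDl.
Lemma mkQ_hom : is_hom mkQ.
Proof.
move=> a x y; rewrite !qaddE' -[_ *: mkQ x]/(q_scale _ _).
by rewrite q_scaleE q_addE.
Qed.
Lemma mkQ0 v : mkQ v = 0 <-> S v.
Proof. by rewrite -[0]/(mkQ 0) mkQ_eq subr0. Qed.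
Lemma mkQ_surj (x : QT) : exists v, x = mkQ v.
Proof. by exists (qv x); rewrite mkQ_qv. Qed.
End Quot.


Section Baer.
Variables (R : pzRingType) (A : lmodType R).

Definition ideal_ext := forall I : R -> Prop, left_ideal I -> forall g : R -> A,
  (forall a x y, I x -> I y -> g (a * x + y) = a *: g x + g y) ->
  exists a0, forall r, I r -> g r = r *: a0.

Hypothesis HA : ideal_ext.
Variables (Y : lmodType R) (S : Y -> Prop) (HS : submod S) (h : Y -> A) (Hh : hom_on S h).

Definition goodp (p : (Y -> Prop) * (Y -> A)) :=
  [/\ submod p.1, (forall y, S y -> p.1 y), hom_on p.1 p.2 & (forall y, S y -> p.2 y = h y)].
Definition PT := {p | goodp p}.
Definition Dm (t : PT) := (proj1_sig t).1.
Definition Fn (t : PT) := (proj1_sig t).2.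
Lemma Dm_sub t : submod (Dm t). Proof. rewrite /Dm /Fn; case: t => p /=; by case=> H _ _ _. Qed.
Lemma Dm_S t y : S y -> Dm t y. Proof. rewrite /Dm /Fn; case: t => p /=; case=> _ H _ _; apply: H. Qed.
Lemma Fn_hom t : hom_on (Dm t) (Fn t). Proof. rewrite /Dm /Fn; case: t => p /=; by case=> _ _ H _. Qed.
Lemma Fn_S t y : S y -> Fn t y = h y. Proof. rewrite /Dm /Fn; case: t => p /=; case=> _ _ _ H; apply: H. Qed.

Definition lePT (s t : PT) : bool :=
  `[< (forall y, Dm s y -> Dm t y) /\ (forall y, Dm s y -> Fn t y = Fn s y) >].

Lemma lePT_refl t : lePT t t. Proof. by apply/asboolP; split. Qed.
Lemma lePT_trans r s t : lePT r s -> lePT s t -> lePT r t.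
Proof.
move=> /asboolP [H1 H2] /asboolP [H3 H4]; apply/asboolP; split.
- by move=> y /H1 /H3.
- by move=> y Dy; rewrite H4 ?H2 //; apply: H1.
Qed.

Lemma t0good : goodp (S, h). Proof. by split. Qed.
Definition t0 : PT := exist _ _ t0good.

Section Chain.
Variable C : set PT.
Hypothesis Ctot : total_on C lePT.
Definition cD y := S y \/ exists t, C t /\ Dm t y.
Definition cF y := match pselect (exists t, C t /\ Dm t y) with
  | left e => Fn (proj1_sig (cid e)) y | right _ => h y end.
Lemma cF_key t y : C t -> Dm t y -> cF y = Fn t y.
Proof.
move=> Ct Dy; rewrite /cF; case: pselect => [e|[]]; last by exists t.
case: (cid e) => t' [Ct' Dy'] /=.
have [/asboolP [H1 H2]|/asboolP [H1 H2]] := Ctot Ct Ct'; first by rewrite H2.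
by rewrite H2.
Qed.
Lemma cF_S y : S y -> cF y = h y.
Proof.
move=> Sy; rewrite /cF; case: pselect => // e.
by case: (cid e) => t' [Ct' Dy'] /=; rewrite Fn_S.
Qed.
Lemma common x y : cD x -> cD y ->
  (S x /\ S y) \/ exists t, [/\ C t, Dm t x & Dm t y].
Proof.
move=> [Sx|[t [Ct Dx]]] [Sy|[t' [Ct' Dy]]].
- by left.
- by right; exists t'; split => //; apply: Dm_S.
- by right; exists t; split => //; apply: Dm_S.
- right; have [/asboolP [H1 H2]|/asboolP [H1 H2]] := Ctot Ct Ct'.
  + by exists t'; split => //; apply: H1.
  + by exists t; split => //; apply: H1.
Qed.
Lemma cgood : goodp (cD, cF).
Proof.
split => /=.
- split; first by left; exact: subm0.
  move=> a x y Dx Dy; have [[Sx Sy]|[t [Ct Dx' Dy']]] := common Dx Dy.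
  + by left; case: HS => _; apply.
  + by right; exists t; split => //; case: (Dm_sub t) => _; apply.
- by move=> y Sy; left.
- move=> a x y Dx Dy; have [[Sx Sy]|[t [Ct Dx' Dy']]] := common Dx Dy.
  + have Sa : S (a *: x + y) by case: HS => _; apply.
    by rewrite !cF_S // Hh.
  + have Da : Dm t (a *: x + y) by case: (Dm_sub t) => _; apply.
    by rewrite !(cF_key Ct) // Fn_hom.
- exact: cF_S.
Qed.
Lemma chain_ub : exists t, forall s, C s -> lePT s t.
Proof.
exists (exist _ _ cgood) => s Cs; apply/asboolP; split.
- by move=> y Dy; right; exists s.
- by move=> y Dy; rewrite /Fn /= (cF_key Cs).
Qed.
End Chain.

Section Step.
Variable t : PT.
Variable y : Y.
Let D := Dm t.
Let F := Fn t.
Let HD : submod D := @Dm_sub t.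
Let HF : hom_on D F := @Fn_hom t.
Definition Iy (r : R) := D (r *: y).
Lemma Iy_ideal : left_ideal Iy.
Proof.
split; rewrite /Iy.
- by rewrite scale0r; exact: subm0.
- by move=> a b Ha Hb; rewrite scalerDl; apply: submD.
- by move=> r x Hx; rewrite -scalerA; apply: submZ.
Qed.
Lemma gy_hom : forall a x z, Iy x -> Iy z ->
  F ((a * x + z) *: y) = a *: F (x *: y) + F (z *: y).
Proof. by move=> a x z Hx Hz; rewrite scalerDl -scalerA HF. Qed.
Variable a0 : A.
Hypothesis Ha0 : forall r, Iy r -> F (r *: y) = r *: a0.
Definition D' z := exists d r, D d /\ z = d + r *: y.
Definition F' z := let p := pick (0, 0) (fun p : Y * R => D p.1 /\ z = p.1 + p.2 *: y) in
  F p.1 + p.2 *: a0.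
Lemma F'E d r : D d -> F' (d + r *: y) = F d + r *: a0.
Proof.
move=> Dd; rewrite /F'.
have := @pickP _ (0, 0) (fun p : Y * R => D p.1 /\ d + r *: y = p.1 + p.2 *: y).
move=> /(_ (ex_intro _ (d, r) (conj Dd erefl))).
case: (pick (0, 0) _) => d' r' /= [Dd' E].
have Ir : Iy (r' - r).
  rewrite /Iy scalerBl; have -> : r' *: y - r *: y = d - d'.
    by rewrite -[r' *: y](addKr d') -E addrA addrK addrC.
  exact: submB.
have := Ha0 Ir; rewrite scalerBl.
have -> : r' *: y - r *: y = d - d'.
  by rewrite -[r' *: y](addKr d') -E addrA addrK addrC.
rewrite (homoB HD HF) // scalerBl => E2.
move/eqP: E2; rewrite subr_eq => /eqP ->.
by rewrite addrAC subrK addrC.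
Qed.
Lemma step_good : goodp (D', F').
Proof.
split => /=.
- split; first by exists 0, 0; rewrite scale0r addr0; split => //; exact: subm0.
  move=> a x z [d1 [r1 [D1 ->]]] [d2 [r2 [D2 ->]]].
  exists (a *: d1 + d2), (a * r1 + r2); split; first by case: HD => _; apply.
  by rewrite scalerDr scalerDl -scalerA addrACA.
- by move=> z Sz; exists z, 0; rewrite scale0r addr0; split => //; apply: Dm_S.
- move=> a x z [d1 [r1 [D1 ->]]] [d2 [r2 [D2 ->]]].
  have -> : a *: (d1 + r1 *: y) + (d2 + r2 *: y) = (a *: d1 + d2) + (a * r1 + r2) *: y.
    by rewrite scalerDr scalerDl -scalerA addrACA.
  have Dad : D (a *: d1 + d2) by case: HD => _; apply.
  rewrite !F'E // HF // scalerDr scalerDl -scalerA addrACA //.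
- move=> z Sz; have := F'E 0 (@Dm_S t z Sz).
  by rewrite !scale0r !addr0 => ->; rewrite /F Fn_S.
Qed.
End Step.

Lemma baer_ext : exists H : Y -> A, is_hom H /\ forall y, S y -> H y = h y.
Proof.
have [t tmax] := @ZL_preorder PT t0 lePT lePT_refl lePT_trans chain_ub.
suff all : forall y, Dm t y.
  exists (Fn t); split; last by move=> y Sy; rewrite Fn_S.
  by move=> a x y; apply: Fn_hom.
move=> y; apply: contrapT => NDy.
have [a0 Ha0] := HA (Iy_ideal t y) (@gy_hom t y).
pose t' : PT := exist _ _ (step_good Ha0).
have le1 : lePT t t'.
  apply/asboolP; split.
  - by move=> z Dz; exists z, 0; rewrite scale0r addr0.
  - move=> z Dz; rewrite /Fn /=.
    have := F'E Ha0 0 Dz.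
    by rewrite !scale0r !addr0.
have /asboolP [H1 _] := tmax t' le1.
apply: NDy; apply: H1; exists 0, 1; rewrite scale1r add0r; split => //.
exact: subm0 (Dm_sub t).
Qed.
End Baer.

Lemma int_principal (I : int -> Prop) : left_ideal I ->
  exists n0 : int, 0 <= n0 /\ forall k, I k <-> exists z, k = z * n0.
Proof.
move=> [I0 ID IM].
case: (pselect (exists k, I k /\ k != 0)) => [[k [Ik k0]]|none]; last first.
  exists 0; split => // k; split => [Ik|[z ->]]; last by rewrite mulr0.
  case: (eqVneq k 0) => [->|kn0]; first by exists 0; rewrite mul0r.
  by exfalso; apply: none; exists k.
pose P m := `[< I m%:Z /\ (0 < m)%N >].
have exP : exists m, P m.
  exists (absz k); apply/asboolP; split; last by rewrite absz_gt0.
  case: (intP k) Ik k0 => // n Ik _; rewrite abszN /=.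
  by have := IM (-1) _ Ik; rewrite mulN1r opprK.
case: (ex_minnP exP) => m /asboolP [Im m0] minm.
exists m%:Z; split => // k'; split => [Ik'|[z ->]]; last first.
  by have := ID _ _ (IM z _ Im) I0; rewrite addr0.
exists (k' %/ m%:Z)%Z.
have mn0 : m%:Z != 0 by rewrite eqz_nat -lt0n.
have rge := modz_ge0 k' mn0.
have rlt : (k' %% m%:Z < m%:Z)%Z by apply: ltz_pmod; rewrite ltz_nat.
have Ir : I (k' %% m%:Z)%Z.
  have -> : (k' %% m%:Z)%Z = - (k' %/ m%:Z)%Z * m%:Z + k'.
    by rewrite {3}(divz_eq k' m%:Z) mulNr addrA addNr add0r.
  by apply: ID => //; apply: IM.
case: (eqVneq (k' %% m%:Z)%Z 0) => [r0|rn0].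
  by rewrite {1}(divz_eq k' m%:Z) r0 addr0.
exfalso; have : P (absz (k' %% m%:Z)%Z).
  apply/asboolP; rewrite gez0_abs //; split => //; rewrite absz_gt0 //.
move/minm; lia.
Qed.

Definition Zr : lmodType int := zmodule rat.
Definition isint (q : Zr) := exists z : int, (q : rat) = z%:~R.
Lemma isint_sub : submod isint.
Proof.
split; first by exists 0.
move=> a x y [z1 ->] [z2 ->]; exists (z1 * a + z2).
by rewrite /GRing.scale /= -mulrzr intrD intrM.
Qed.
Notation QZ := (quotT isint_sub).
Definition qz (q : rat) : QZ := mkQ isint_sub q.
Lemma qz_hom : is_hom (qz : Zr -> QZ). Proof. exact: mkQ_hom. Qed.
Lemma qz_eq q q' : qz q = qz q' <-> isint (q - q').
Proof. exact: mkQ_eq. Qed.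
Lemma qz0 q : qz q = 0 <-> isint q.
Proof. exact: mkQ0. Qed.
Lemma qz_surj (x : QZ) : exists q, x = qz q.
Proof. by have [v ->] := mkQ_surj x; exists v. Qed.
Lemma qzZ (a : int) q : a *: qz q = qz (q * a%:~R).
Proof. by rewrite -(homZ _ _ qz_hom) /GRing.scale /= mulrzr. Qed.
Lemma qzD q q' : qz q + qz q' = qz (q + q').
Proof. by rewrite -(homD _ _ qz_hom). Qed.

Lemma QZ_ext : ideal_ext QZ.
Proof.
move=> I HI g Hg; have [n0 [n0ge HIn]] := int_principal HI.
case: (HI) => I0 _ _.
have g0 : g 0 = 0.
  have := Hg 1 0 0 I0 I0; rewrite mulr0 addr0 scale1r => E.
  by apply: (addrI (g 0)); rewrite addr0 -E.
case: (eqVneq n0 0) => [n00|n0n].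
  by exists 0 => r /HIn [z ->]; rewrite n00 mulr0 g0 scaler0.
have [q gq] := qz_surj (g n0).
exists (qz (q / n0%:~R)) => r /HIn [z ->].
have In0 : I n0 by apply/HIn; exists 1; rewrite mul1r.
have := Hg z n0 0 In0 I0; rewrite addr0 g0 addr0 => ->; rewrite gq !qzZ.
congr qz; rewrite intrM; field; by rewrite intr_eq0.
Qed.

Lemma sep (M : zmodType) (d : M) : d != 0 ->
  exists phi : M -> QZ, (forall x y, phi (x + y) = phi x + phi y) /\ phi d != 0.
Proof.
move=> dn0.
pose Y : lmodType int := zmodule M.
pose S (y : Y) := exists k : int, y = d *~ k.
have HS : submod S.
  split; first by exists 0; rewrite mulr0z.
  move=> a x y [k1 ->] [k2 ->]; exists (k1 * a + k2).
  by rewrite mulrzDr mulrzA.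
pose N (k : int) := d *~ k = 0.
have HN : left_ideal N.
  split; rewrite /N; first by rewrite mulr0z.
  - by move=> x y Hx Hy; rewrite mulrzDr Hx Hy addr0.
  - by move=> r x Hx; rewrite mulrC mulrzA Hx mul0rz.
have [n0 [n0ge HNn]] := int_principal HN.
pose m : int := if n0 == 0 then 2 else n0.
have m2 : 2 <= m.
  rewrite /m; case: (eqVneq n0 0) => // n0n.
  case: (eqVneq n0 1) => [n01|n01]; last by lia.
  exfalso; move: dn0; rewrite -[d]mulr1z.
  have -> : d *~ 1 = 0 by apply: (proj2 (HNn 1)); exists 1; rewrite n01 mul1r.
  by rewrite eqxx.
have mn0 : m%:~R != 0 :> rat by rewrite intr_eq0; lia.
have hE k k' : d *~ k = d *~ k' -> isint (k%:~R / m%:~R - k'%:~R / m%:~R).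
  move=> E; have : N (k - k') by rewrite /N mulrzBr E subrr.
  move/HNn => [z Ez]; rewrite /m; case: (eqVneq n0 0) => [n00|n0n].
    by move: Ez; rewrite n00 mulr0 => /eqP; rewrite subr_eq0 => /eqP ->; exists 0; rewrite subrr.
  exists z; rewrite -mulrBl -intrB Ez intrM; field; by rewrite intr_eq0.
pose h (y : Y) : QZ := qz ((pick 0 (fun k => y = d *~ k))%:~R / m%:~R).
have hE2 k : h (d *~ k) = qz (k%:~R / m%:~R).
  rewrite /h; have := @pickP _ 0 (fun k' => d *~ k = d *~ k').
  move=> /(_ (ex_intro _ k erefl)) E; apply/qz_eq; apply: hE; by rewrite -E.
have Hh : hom_on S h.
  move=> a x y [k1 ->] [k2 ->].
  have -> : a *: (d *~ k1 : Y) + d *~ k2 = d *~ (k1 * a + k2).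
    by rewrite mulrzDr mulrzA.
  rewrite !hE2 qzZ qzD; congr qz; rewrite intrD intrM; field; exact: mn0.
have [H [HH HHS]] := baer_ext QZ_ext HS Hh.
exists H; split.
  by move=> x y; have := HH 1 x y; rewrite !scale1r.
have Sd : S d by exists 1; rewrite mulr1z.
rewrite HHS // -[d]mulr1z hE2; apply/negP => /eqP /qz0 [z].
move=> E.
have E2 : (z * m)%:~R = 1 :> rat by rewrite intrM -E divfK.
have E3 : z * m = 1 by apply: (@intr_inj rat); rewrite E2.
move: E3 m2; clear; move: m => m' E3 m2.
have [hz|hz] : z <= 0 \/ 1 <= z by lia. all: nia.
Qed.

Section Additive.
Variables (M N : zmodType) (f : M -> N).
Hypothesis Hf : forall x y, f (x + y) = f x + f y.
Lemma ad0 : f 0 = 0.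
Proof. by apply: (addrI (f 0)); rewrite -Hf !addr0. Qed.
Lemma adN x : f (- x) = - f x.
Proof. by apply: (addrI (f x)); rewrite -Hf !subrr ad0. Qed.
Lemma adB x y : f (x - y) = f x - f y.
Proof. by rewrite Hf adN. Qed.
Lemma adMn x n : f (x *+ n) = f x *+ n.
Proof. by elim: n => [|n IH]; rewrite ?mulr0n ?ad0 // !mulrS Hf IH. Qed.
Lemma adMz x k : f (x *~ k) = f x *~ k.
Proof.
case: k => n; first by rewrite /intmul adMn.
by rewrite /intmul adN adMn.
Qed.
End Additive.

Lemma scale_intE (V : lmodType int) (a : int) (v : V) : a *: v = v *~ a.
Proof. by rewrite -[a in LHS]intz scaler_int. Qed.

Section J.
Variables (R : pzRingType) (A : lmodType R).
Definition Phi := {phi : A -> QZ | forall x y, phi (x + y) = phi x + phi y}.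
Definition addit (f : R -> QZ) := forall x y, f (x + y) = f x + f y.
Definition JT : Type := {psi : R -> Phi -> QZ | forall p, addit (fun s => psi s p)}.
HB.instance Definition _ := gen_eqMixin JT.
HB.instance Definition _ := gen_choiceMixin JT.
Definition jv (x : JT) := proj1_sig x.
Lemma jvP (x : JT) p : addit (fun s => jv x s p). Proof. exact: (proj2_sig x). Qed.
Lemma jv_ext (x y : JT) : (forall s p, jv x s p = jv y s p) -> x = y.
Proof.
case: x => x Hx; case: y => y Hy /= E.
have Exy : x = y by apply: funext => s; apply: funext => p; apply: E.
subst y; congr exist; exact: Prop_irrelevance.
Qed.
Fact j_zero_ok : forall p : Phi, addit (fun s : R => (fun (_ : R) (_ : Phi) => 0 : QZ) s p).
Proof. by move=> p x y; rewrite addr0. Qed.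
Definition j_zero : JT := exist _ _ j_zero_ok.
Fact j_add_ok (x y : JT) : forall p, addit (fun s => (fun s p => jv x s p + jv y s p) s p).
Proof. by move=> p a b /=; rewrite !jvP addrACA. Qed.
Definition j_add x y : JT := exist _ _ (j_add_ok x y).
Fact j_opp_ok (x : JT) : forall p, addit (fun s => (fun s p => - jv x s p) s p).
Proof. by move=> p a b /=; rewrite jvP opprD. Qed.
Definition j_opp x : JT := exist _ _ (j_opp_ok x).
Fact j_scale_ok (r : R) (x : JT) : forall p, addit (fun s => (fun s p => jv x (s * r) p) s p).
Proof. by move=> p a b /=; rewrite mulrDl jvP. Qed.
Definition j_scale r x : JT := exist _ _ (j_scale_ok r x).
Fact j_addA : associative j_add.
Proof. by move=> x y z; apply: jv_ext => s p /=; rewrite addrA. Qed.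
Fact j_addC : commutative j_add.
Proof. by move=> x y; apply: jv_ext => s p /=; rewrite addrC. Qed.
Fact j_add0 : left_id j_zero j_add.
Proof. by move=> x; apply: jv_ext => s p /=; rewrite add0r. Qed.
Fact j_addN : left_inverse j_zero j_opp j_add.
Proof. by move=> x; apply: jv_ext => s p /=; rewrite addNr. Qed.
HB.instance Definition _ := GRing.isZmodule.Build JT j_addA j_addC j_add0 j_addN.
Fact j_scaleA a b v : j_scale a (j_scale b v) = j_scale (a * b) v.
Proof. by apply: jv_ext => s p /=; rewrite mulrA. Qed.
Fact j_scale1 : left_id 1 j_scale.
Proof. by move=> x; apply: jv_ext => s p /=; rewrite mulr1. Qed.
Fact j_scaleDr : right_distributive j_scale +%R.
Proof. by move=> a x y; apply: jv_ext => s p /=. Qed.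
Fact j_scaleDl v : {morph j_scale^~ v : a b / a + b}.
Proof. by move=> a b; apply: jv_ext => s p /=; rewrite mulrDr jvP. Qed.
HB.instance Definition _ := GRing.Zmodule_isLmodule.Build R JT
  j_scaleA j_scale1 j_scaleDr j_scaleDl.

Lemma jvZ r (x : JT) s p : jv (r *: x) s p = jv x (s * r) p. Proof. by []. Qed.
Lemma jvD (x y : JT) s p : jv (x + y) s p = jv x s p + jv y s p. Proof. by []. Qed.

Fact jA_ok (a : A) : forall p : Phi, addit (fun s => (fun s (p : Phi) => proj1_sig p (s *: a)) s p).
Proof. by move=> p x y /=; rewrite scalerDl (proj2_sig p). Qed.
Definition jA (a : A) : JT := exist _ _ (jA_ok a).
Lemma jA_hom : is_hom jA.
Proof.
move=> b x y; apply: jv_ext => s p /=.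
by rewrite scalerDr scalerA (proj2_sig p).
Qed.
Lemma jA_inj : injective jA.
Proof.
move=> a a' E; apply/eqP; rewrite -subr_eq0; apply: contraT => dn0.
have [phi [Hphi phid]] := sep dn0.
have := congr1 (fun x => jv x 1 (exist _ phi Hphi)) E; rewrite /= !scale1r => E2.
by move: phid; rewrite (adB Hphi) E2 subrr eqxx.
Qed.

Lemma J_inj (Y : lmodType R) (S : Y -> Prop) : submod S ->
  forall h : Y -> JT, hom_on S h ->
  exists H : Y -> JT, is_hom H /\ forall y, S y -> H y = h y.
Proof.
move=> HS h Hh.
pose S' (y : zmodule Y) := S y.
have HS' : submod S'.
  split; first exact: (subm0 HS).
  move=> a x y Sx Sy; rewrite /S' scale_intE -(@scaler_int R Y).
  by case: HS => _; apply.
have step : forall p : Phi, exists Hp : zmodule Y -> QZ,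
    is_hom Hp /\ forall y, S' y -> Hp y = jv (h y) 1 p.
  move=> p; apply: (baer_ext QZ_ext HS').
  move=> a x y Sx Sy; rewrite scale_intE -(@scaler_int R Y) Hh //.
  rewrite jvD jvZ mul1r.
  have := adMz (jvP (h x) p) 1 a; rewrite /= => ->.
  by rewrite scale_intE.
have [Hf HfP] := choice step.
have Hfadd p : forall x y, Hf p (x + y) = Hf p x + Hf p y.
  by move=> x y; have := (HfP p).1 1 x y; rewrite !scale1r.
have Hok (y : Y) : forall p, addit (fun s => (fun s p => Hf p (s *: y)) s p).
  by move=> p a b /=; rewrite scalerDl Hfadd.
exists (fun y => exist _ _ (Hok y)); split.
  move=> b x y; apply: jv_ext => s p /=.
  by rewrite scalerDr scalerA Hfadd.
move=> y Sy; apply: jv_ext => s p /=.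
have Ssy : S' (s *: y) by apply: submZ.
by rewrite (HfP p).2 // (homoZ _ HS Hh) // jvZ mul1r.
Qed.
End J.

Section ExtHom.
Variables (R : pzRingType) (C M P : lmodType R) (pi : P -> C) (S : P -> Prop).
Variables (HS : submod S) (h : P -> M).
Hypotheses (Hext : Ext1_zero C M) (Hpi : is_hom pi) (pis : forall c, exists p, pi p = c)
  (piker : forall p, pi p = 0 <-> S p) (Hh : hom_on S h).

Definition Tpo (v : (M * P)%type) := exists s, S s /\ v = (h s, - s).
Lemma Tpo_sub : submod Tpo.
Proof.
split; first by exists 0; rewrite (homo0 HS Hh) oppr0; split => //; exact: subm0.
move=> a x y [s1 [S1 ->]] [s2 [S2 ->]]; exists (a *: s1 + s2); split.
  by case: HS => _; apply.
by rewrite Hh // opprD -scalerN.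
Qed.
Local Notation E := (quotT Tpo_sub).
Definition fE (m : M) : E := mkQ Tpo_sub (m, 0).
Definition gE (e : E) : C := pi (qv e).2.
Lemma gE_mk v : gE (mkQ Tpo_sub v) = pi v.2.
Proof.
rewrite /gE; have [s [Ss E1]] := qv_S Tpo_sub v.
have E2 : (qv (mkQ Tpo_sub v)).2 - v.2 = - s by exact: (congr1 snd E1).
have -> : (qv (mkQ Tpo_sub v)).2 = v.2 + - s by rewrite -E2 addrC subrK.
by rewrite homD // homN // (proj2 (piker s) Ss) oppr0 addr0.
Qed.
Lemma pair_scale a (m : M) (p : P) : a *: ((m, p) : (M * P)%type) = (a *: m, a *: p).
Proof. by []. Qed.
Lemma pair_add (m m' : M) (p p' : P) : ((m, p) : (M * P)%type) + (m', p') = (m + m', p + p').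
Proof. by []. Qed.
Lemma pair_sub (m m' : M) (p p' : P) : ((m, p) : (M * P)%type) - (m', p') = (m - m', p - p').
Proof. by []. Qed.
Lemma fE_hom : is_hom fE.
Proof.
move=> a x y; rewrite /fE -(mkQ_hom Tpo_sub) pair_scale pair_add.
by rewrite scaler0 addr0.
Qed.
Lemma gE_hom : is_hom gE.
Proof.
move=> a x y; have [u ->] := mkQ_surj x; have [v ->] := mkQ_surj y.
by rewrite -(mkQ_hom Tpo_sub) !gE_mk Hpi.
Qed.
Lemma fE_inj : injective fE.
Proof.
move=> m m' /(mkQ_eq Tpo_sub) [s [Ss E1]].
have s0 : s = 0 by move: (congr1 snd E1) => /= /eqP; rewrite subr0 eq_sym oppr_eq0 => /eqP.
move: (congr1 fst E1); rewrite /= s0 (homo0 HS Hh) => /eqP; rewrite subr_eq0 => /eqP.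
done.
Qed.
Lemma fEgE : short_exact fE gE.
Proof.
split.
- exact: fE_hom.
- exact: gE_hom.
- exact: fE_inj.
- by move=> c; have [p <-] := pis c; exists (mkQ Tpo_sub (0, p)); rewrite gE_mk.
- move=> e; have [[m p] ->] := mkQ_surj e; rewrite gE_mk /=; split.
  + move=> /piker Sp; exists (m + h p); apply/(mkQ_eq Tpo_sub).
    exists (- p); split; first by apply: submN.
    rewrite (homoN HS Hh) // opprK pair_sub; congr pair; last by rewrite subr0.
    by rewrite opprD addrA subrr add0r.
  + move=> [m' E1]; have := congr1 gE E1; rewrite /fE !gE_mk /= => ->.
    exact: hom0 Hpi.
Qed.

Lemma ext_hom : exists H : P -> M, is_hom H /\ forall s, S s -> H s = h s.
Proof.
have [sg [Hsg Hsgs]] := Hext fEgE.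
have ex p : exists m, fE m = mkQ Tpo_sub (0, p) - sg (pi p).
  have [_ _ _ _ Hx] := fEgE.
  have H0 : gE (mkQ Tpo_sub (0, p) - sg (pi p)) = 0.
    by rewrite (homB _ _ gE_hom) Hsgs gE_mk subrr.
  by have [m Em] := proj1 (Hx _) H0; exists m.
pose H p := pick 0 (fun m => fE m = mkQ Tpo_sub (0, p) - sg (pi p)).
have HE p : fE (H p) = mkQ Tpo_sub (0, p) - sg (pi p).
  by apply: (@pickP _ 0 (fun m => fE m = mkQ Tpo_sub (0, p) - sg (pi p))); apply: ex.
exists H; split.
  move=> a x y; apply: fE_inj; rewrite fE_hom !HE Hpi Hsg.
  have -> : ((0, a *: x + y) : (M * P)%type) = a *: (0, x) + (0, y).
    by rewrite pair_scale pair_add scaler0 addr0.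
  by rewrite (mkQ_hom Tpo_sub) scalerBr opprD addrACA.
move=> s Ss; apply: fE_inj; rewrite HE (proj2 (piker s) Ss) (hom0 Hsg) subr0.
apply/(mkQ_eq Tpo_sub); exists (- s); split; first by apply: submN.
by rewrite (homoN HS Hh) // pair_sub opprK sub0r subr0.
Qed.
End ExtHom.

Section Coh.
Variable R : pzRingType.

Definition syz k n (rho : 'I_k -> 'I_n -> R) (t : 'I_k -> R) :=
  forall i, \sum_j t j * rho j i = 0.
Definition fg_syz k n (rho : 'I_k -> 'I_n -> R) :=
  exists p (mu : 'I_p -> 'I_k -> R), (forall l, syz rho (mu l)) /\
    (forall t, syz rho t -> exists s : 'I_p -> R, forall j, t j = \sum_l s l * mu l j).

Lemma lin_comb p k (s : 'I_p -> R) (m : 'I_p -> 'I_k -> R) (c : 'I_k -> R) :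
  \sum_j (\sum_l s l * m l j) * c j = \sum_l s l * (\sum_j m l j * c j).
Proof.
under eq_bigr do rewrite mulr_suml.
rewrite exchange_big; apply: eq_bigr => l _; rewrite mulr_sumr.
by apply: eq_bigr => j _; rewrite mulrA.
Qed.

Lemma delta_sum k (t : 'I_k -> R) j : \sum_l t l * (l == j)%:R = t j.
Proof.
rewrite (bigD1 j) //= eqxx mulr1 big1 ?addr0 // => l /negbTE ->.
by rewrite mulr0.
Qed.
Lemma delta_sum' k (t : 'I_k -> R) j : \sum_l (j == l)%:R * t l = t j.
Proof.
rewrite (bigD1 j) //= eqxx mul1r big1 ?addr0 // => l; rewrite eq_sym => /negbTE ->.
by rewrite mul0r.
Qed.

Definition catf p1 p2 T (G1 : 'I_p1 -> T) (G2 : 'I_p2 -> T) (l : 'I_(p1 + p2)) : T :=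
  match split l with inl a => G1 a | inr b => G2 b end.
Lemma catf_l p1 p2 T (G1 : 'I_p1 -> T) (G2 : 'I_p2 -> T) i : catf G1 G2 (lshift p2 i) = G1 i.
Proof. by rewrite /catf (unsplitK (inl _ i)). Qed.
Lemma catf_r p1 p2 T (G1 : 'I_p1 -> T) (G2 : 'I_p2 -> T) i : catf G1 G2 (rshift p1 i) = G2 i.
Proof. by rewrite /catf (unsplitK (inr _ i)). Qed.
Lemma sum_catf p1 p2 k (s1 : 'I_p1 -> R) (s2 : 'I_p2 -> R) (G1 : 'I_p1 -> 'I_k -> R)
  (G2 : 'I_p2 -> 'I_k -> R) j :
  \sum_l catf s1 s2 l * catf G1 G2 l j =
  \sum_l s1 l * G1 l j + \sum_l s2 l * G2 l j.
Proof.
rewrite big_split_ord /=; congr (_ + _); apply: eq_bigr => l _.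
  by rewrite !catf_l. by rewrite !catf_r.
Qed.

Hypothesis Hc : left_coherent R.

Lemma coh_vec k (b : 'I_k -> R) : exists p (mu : 'I_p -> 'I_k -> R),
  (forall l, \sum_j mu l j * b j = 0) /\
  (forall t, \sum_j t j * b j = 0 -> exists s : 'I_p -> R, forall j, t j = \sum_l s l * mu l j).
Proof.
pose I (v : R) := exists r : 'I_k -> R, v = \sum_j r j * b j.
have HI : left_ideal I.
  split.
  - by exists (fun _ => 0); rewrite big1 // => j _; rewrite mul0r.
  - move=> x y [r1 ->] [r2 ->]; exists (fun j => r1 j + r2 j).
    by rewrite -big_split; apply: eq_bigr => j _; rewrite mulrDl.
  - move=> r x [r1 ->]; exists (fun j => r * r1 j).
    by rewrite mulr_sumr; apply: eq_bigr => j _; rewrite mulrA.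
have fgI : fin_gen_left_ideal I by exists k, b.
have [n [x [Hx [k' [rel [Hrel Hrelg]]]]]] := Hc HI fgI.
have Hx' v : I v <-> exists r : 'I_n -> R, v = \sum_i r i * x i by apply: Hx.
have Hrel' j : \sum_i rel j i * x i = 0 by apply: Hrel.
have Hrelg' r : \sum_i r i * x i = 0 ->
    exists s : 'I_k' -> R, forall i, r i = \sum_j s j * rel j i by apply: Hrelg.
clear Hx Hrel Hrelg.
have cex j : exists c : 'I_n -> R, b j = \sum_i c i * x i.
  apply/Hx'; exists (fun j' => (j == j')%:R); by rewrite delta_sum'.
have [c Hc'] := choice cex.
have dex i : exists d : 'I_k -> R, x i = \sum_j d j * b j.
  apply/Hx'; exists (fun i' => (i == i')%:R); by rewrite delta_sum'.
have [d Hd] := choice dex.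
pose G1 (j : 'I_k) (j' : 'I_k) := (j == j')%:R - \sum_i c j i * d i j'.
pose G2 (l : 'I_k') (j' : 'I_k) := \sum_i rel l i * d i j'.
exists (k + k')%N, (catf G1 G2); split.
  move=> l; rewrite /catf; case: (split l) => [j|l'].
  - rewrite /G1; under eq_bigr do rewrite mulrBl.
    rewrite sumrB delta_sum' lin_comb.
    under [X in _ - X]eq_bigr do rewrite -Hd.
    by rewrite -Hc' subrr.
  - rewrite /G2 lin_comb; under eq_bigr do rewrite -Hd; exact: Hrel'.
move=> t Ht.
pose u i := \sum_j t j * c j i.
have Hu : \sum_i u i * x i = 0.
  by rewrite /u lin_comb -[in RHS]Ht; apply: eq_bigr => j _; rewrite Hc'.
have [sg Hsg] := Hrelg' _ Hu.
exists (catf t sg) => j; rewrite sum_catf /G1 /G2.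
under eq_bigr do rewrite mulrBr.
rewrite sumrB delta_sum.
have -> : \sum_l t l * (\sum_i c l i * d i j) = \sum_i u i * d i j.
  rewrite /u; under [RHS]eq_bigr do rewrite mulr_suml.
  rewrite exchange_big; apply: eq_bigr => l _; rewrite mulr_sumr.
  by apply: eq_bigr => i _; rewrite mulrA.
have -> : \sum_l sg l * (\sum_i rel l i * d i j) = \sum_i u i * d i j.
  rewrite -lin_comb; apply: eq_bigr => i _; by rewrite Hsg.
by rewrite subrK.
Qed.

Lemma coh_mat n : forall k (rho : 'I_k -> 'I_n -> R), fg_syz rho.
Proof.
elim: n => [|n IH] k rho.
  exists k, (fun l j => (l == j)%:R); split; first by move=> l [].
  by move=> t _; exists t => j; rewrite delta_sum.
pose b j := rho j ord_max.
have [p1 [tau [Htau Htaug]]] := coh_vec b.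
pose rho' (l : 'I_p1) (i : 'I_n) := \sum_j tau l j * rho j (lift ord_max i).
have [p2 [mu [Hmu Hmug]]] := IH _ rho'.
exists p2, (fun m j => \sum_l mu m l * tau l j); split.
  move=> m i; rewrite lin_comb; case: (unliftP ord_max i) => [i' ->|->].
  - exact: Hmu.
  - by rewrite big1 // => l _; rewrite Htau mulr0.
move=> t Ht.
have [sg Hsg] := Htaug t (Ht ord_max).
have Hs' : syz rho' sg.
  move=> i; rewrite /rho' -lin_comb -[in RHS](Ht (lift ord_max i)).
  by apply: eq_bigr => j _; rewrite Hsg.
have [s Hs] := Hmug _ Hs'.
exists s => j; rewrite Hsg.
under eq_bigr do rewrite Hs mulr_suml.
rewrite exchange_big; apply: eq_bigr => m _; rewrite mulr_sumr.
by apply: eq_bigr => l _; rewrite mulrA.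
Qed.
End Coh.

Section LinHelp.
Variables (R : pzRingType) (V : lmodType R).
Lemma sumZ_comb k n (t : 'I_k -> R) (m : 'I_k -> 'I_n -> R) (y : 'I_n -> V) :
  \sum_j t j *: (\sum_i m j i *: y i) = \sum_i (\sum_j t j * m j i) *: y i.
Proof.
under eq_bigr do rewrite scaler_sumr.
rewrite exchange_big; apply: eq_bigr => i _; rewrite scaler_suml.
by apply: eq_bigr => j _; rewrite scalerA.
Qed.
Lemma sumZ_add k a (t t' : 'I_k -> R) (w : 'I_k -> V) :
  \sum_j (a * t j + t' j) *: w j = a *: (\sum_j t j *: w j) + \sum_j t' j *: w j.
Proof.
rewrite scaler_sumr -big_split; apply: eq_bigr => j _.
by rewrite scalerDl scalerA.
Qed.
Lemma sumZ_sub k (t t' : 'I_k -> R) (w : 'I_k -> V) :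
  \sum_j (t j - t' j) *: w j = \sum_j t j *: w j - \sum_j t' j *: w j.
Proof. by rewrite -sumrB; apply: eq_bigr => j _; rewrite scalerBl. Qed.
Lemma sumZ_delta k (w : 'I_k -> V) jj : \sum_j (jj == j)%:R *: w j = w jj.
Proof.
rewrite (bigD1 jj) //= eqxx scale1r big1 ?addr0 // => l; rewrite eq_sym => /negbTE ->.
by rewrite scale0r.
Qed.
End LinHelp.

Section FFun.
Variable R : pzRingType.
Definition ev k (j : 'I_k) : {ffun 'I_k -> R^o} := [ffun j' => (j == j')%:R].
Arguments ev {k}.
Lemma ffun_dec k (t : {ffun 'I_k -> R^o}) : t = \sum_j t j *: ev j.
Proof.
apply/ffunP => i; rewrite sum_ffunE.
under eq_bigr do rewrite ffunE /ev ffunE.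
rewrite (bigD1 i) //= eqxx big1 ?addr0; first by rewrite [_ *: _]mulr1.
by move=> l /negbTE ->; rewrite [_ *: _]mulr0.
Qed.
Lemma ffun_sumE k n (t : 'I_k -> R) (m : 'I_k -> {ffun 'I_n -> R^o}) i :
  (\sum_j t j *: m j) i = \sum_j t j * m j i.
Proof. by rewrite sum_ffunE; apply: eq_bigr => j _; rewrite ffunE. Qed.
Lemma ev_sum k (t : 'I_k -> R) jj : (\sum_j t j *: ev j) jj = t jj.
Proof.
rewrite ffun_sumE; under eq_bigr do rewrite ffunE.
rewrite (bigD1 jj) //= eqxx mulr1 big1 ?addr0 // => l /negbTE ->.
by rewrite mulr0.
Qed.
End FFun.
Arguments ev {R k}.

Section FPQ.
Variables (R : pzRingType) (Hc : left_coherent R) (A Jm : lmodType R).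
Hypothesis HA : FP_injective A.
Variables (j : A -> Jm) (Hj : is_hom j) (jinj : injective j).
Hypothesis Jinj : forall (Y : lmodType R) (S : Y -> Prop), submod S ->
  forall h : Y -> Jm, hom_on S h -> exists H, is_hom H /\ forall y, S y -> H y = h y.

Definition imgj w := exists a, w = j a.
Lemma imgj_sub : submod imgj.
Proof.
split; first by exists 0; rewrite (hom0 Hj).
by move=> a x y [a1 ->] [a2 ->]; exists (a *: a1 + a2); rewrite Hj.
Qed.
Local Notation N := (quotT imgj_sub).

Lemma SP_sub k (rel : 'I_k -> 'I_k.+1 -> R) : True. Proof. by []. Qed.

Definition SPf k n (rel : 'I_k -> 'I_n -> R) (t : {ffun 'I_k -> R^o}) := syz rel (fun jj => t jj).
Lemma SPf_sub k n (rel : 'I_k -> 'I_n -> R) : submod (SPf rel).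
Proof.
split.
  by move=> i; rewrite big1 // => jj _; rewrite ffunE mul0r.
move=> a x y Hx Hy i; rewrite /SPf /syz.
under eq_bigr do rewrite !ffunE [_ *: _]/= mulrDl -mulrA.
by rewrite big_split /= -mulr_sumr Hx Hy mulr0 addr0.
Qed.

Lemma fpG k n (rel : 'I_k -> 'I_n -> R) : finitely_presented (quotT (SPf_sub rel)).
Proof.
have [p [mu [Hmu Hmug]]] := coh_mat Hc rel.
exists k, (fun jj => mkQ (SPf_sub rel) (ev jj)); split.
  move=> v; split => // _; have [t ->] := mkQ_surj v.
  by exists (fun jj => t jj); rewrite {1}(ffun_dec t) homSZ //; exact: mkQ_hom.
exists p, mu; split.
  move=> l; rewrite -homSZ; last exact: mkQ_hom.
  by apply/mkQ0 => i; under eq_bigr do rewrite ev_sum; apply: Hmu.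
move=> r; rewrite -homSZ; last exact: mkQ_hom.
move=> /mkQ0 Hr; apply: Hmug => i; have := Hr i.
by under eq_bigr do rewrite ev_sum.
Qed.

Lemma fpinjN : FP_injective N.
Proof.
move=> F [n [x [Hx [k [rel [Hrel Hrelg]]]]]] E al be [Hal Hbe alinj besurj Hex].
have [y Hy] := choice (fun i => besurj (x i)).
have nex jj : exists m : N, \sum_i rel jj i *: y i = al m.
  apply/Hex; rewrite homSZ //; under eq_bigr do rewrite Hy; exact: Hrel.
have [nn Hnn] := choice nex.
have wex jj : exists w, mkQ imgj_sub w = nn jj.
  by have [w ->] := mkQ_surj (nn jj); exists w.
have [w Hw] := choice wex.
have compat (t : 'I_k -> R) : syz rel t -> imgj (\sum_jj (t jj : R) *: w jj).
  move=> St; apply/(mkQ0 imgj_sub); rewrite homSZ; last exact: mkQ_hom.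
  under eq_bigr do rewrite Hw.
  apply: alinj; rewrite homSZ // (hom0 Hal).
  under eq_bigr do rewrite -Hnn.
  rewrite sumZ_comb big1 // => i _; by rewrite St scale0r.
pose P := {ffun 'I_k -> R^o}.
pose hA (t : P) := pick 0 (fun a => j a = \sum_jj (t jj : R) *: w jj).
have hAE (t : P) : SPf rel t -> j (hA t) = \sum_jj (t jj : R) *: w jj.
  move=> St; apply: (@pickP _ 0 (fun a => j a = \sum_jj (t jj : R) *: w jj)).
  by have [a Ha] := compat _ St; exists a.
have HhA : hom_on (SPf rel) hA.
  move=> a t t' St St'; apply: jinj.
  have Sa : SPf rel (a *: t + t') by case: (SPf_sub rel) => _; apply.
  rewrite Hj !hAE //; under eq_bigr do rewrite !ffunE [_ *: _]/=.
  by rewrite sumZ_add.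
have pis : forall c : quotT (SPf_sub rel), exists p, mkQ _ p = c.
  by move=> c; have [v ->] := mkQ_surj c; exists v.
have [HA' [HHA' HA'S]] := ext_hom (SPf_sub rel) (HA (fpG rel)) (mkQ_hom _)
  pis (mkQ0 _) HhA.
pose a jj := HA' (ev jj).
have Ha (t : 'I_k -> R) : syz rel t -> j (\sum_jj t jj *: a jj) = \sum_jj t jj *: w jj.
  move=> St; rewrite /a -homSZ // HA'S; last by move=> i; under eq_bigr do rewrite ev_sum; apply: St.
  rewrite hAE; last by move=> i; under eq_bigr do rewrite ev_sum; apply: St.
  by apply: eq_bigr => jj _; rewrite ev_sum.
pose w' jj := w jj - j (a jj).
have Hw' (t : 'I_k -> R) : syz rel t -> \sum_jj t jj *: w' jj = 0.
  move=> St; rewrite /w'; under eq_bigr do rewrite scalerBr.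
  by rewrite sumrB -homSZ // Ha // subrr.
pose Y := {ffun 'I_n -> R^o}.
pose rowv jj : Y := [ffun i => rel jj i].
have rsum (t : 'I_k -> R) i : (\sum_jj t jj *: rowv jj) i = \sum_jj t jj * rel jj i.
  by rewrite ffun_sumE; apply: eq_bigr => jj _; rewrite ffunE.
pose SY (v : Y) := exists t : 'I_k -> R, v = \sum_jj t jj *: rowv jj.
have HSY : submod SY.
  split; first by exists (fun _ => 0); rewrite big1 // => jj _; rewrite scale0r.
  move=> b v v' [t ->] [t' ->]; exists (fun jj => b * t jj + t' jj).
  by rewrite sumZ_add.
pose h2 (v : Y) := \sum_jj (pick (fun _ => 0) (fun t => v = \sum_jj t jj *: rowv jj)) jj *: w' jj.
have h2E (t : 'I_k -> R) : h2 (\sum_jj t jj *: rowv jj) = \sum_jj t jj *: w' jj.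
  rewrite /h2; have := @pickP _ (fun _ => 0) (fun t' => \sum_jj t jj *: rowv jj = \sum_jj t' jj *: rowv jj).
  move=> /(_ (ex_intro _ t erefl)); set t' := pick _ _ => Et.
  apply/eqP; rewrite eq_sym -subr_eq0 -sumZ_sub; apply/eqP; apply: Hw' => i.
  have := congr1 (fun f : Y => f i) Et; rewrite /= !rsum => Ei.
  under eq_bigr do rewrite mulrBl.
  by rewrite sumrB Ei subrr.
have Hh2 : hom_on SY h2.
  by move=> b v v' [t ->] [t' ->]; rewrite -sumZ_add !h2E sumZ_add.
have [H2 [HH2 H2S]] := Jinj HSY Hh2.
pose c i : N := mkQ imgj_sub (H2 (ev i)).
have Hcrel jj : \sum_i rel jj i *: c i = nn jj.
  rewrite /c -homSZ; last exact: mkQ_hom.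
  rewrite -homSZ //.
  have -> : \sum_i rel jj i *: ev i = rowv jj.
    by rewrite [RHS]ffun_dec; apply: eq_bigr => i _; rewrite /rowv ffunE.
  have -> : rowv jj = \sum_jj' (jj == jj')%:R *: rowv jj' by rewrite sumZ_delta.
  rewrite H2S; last by eexists.
  rewrite h2E sumZ_delta /w' (homB _ _ (mkQ_hom _)) Hw.
  have -> : mkQ imgj_sub (j (a jj)) = 0 by apply/mkQ0; exists (a jj).
  by rewrite subr0.
pose y' i := y i - al (c i).
have Hy'rel jj : \sum_i rel jj i *: y' i = 0.
  rewrite /y'; under eq_bigr do rewrite scalerBr.
  by rewrite sumrB -homSZ // Hcrel Hnn subrr.
pose sec (v : F) := \sum_i (pick (fun _ => 0) (fun r => v = \sum_i r i *: x i)) i *: y' i.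
have secE (r : 'I_n -> R) : sec (\sum_i r i *: x i) = \sum_i r i *: y' i.
  rewrite /sec; have := @pickP _ (fun _ => 0) (fun r' => \sum_i r i *: x i = \sum_i r' i *: x i).
  move=> /(_ (ex_intro _ r erefl)); set r' := pick _ _ => Er.
  apply/eqP; rewrite eq_sym -subr_eq0 -sumZ_sub; apply/eqP.
  have [sg Hsg] : exists sg : 'I_k -> R, forall i, r i - r' i = \sum_jj sg jj * rel jj i.
    by apply: Hrelg; rewrite sumZ_sub Er subrr.
  under eq_bigr do rewrite Hsg.
  by rewrite -sumZ_comb big1 // => jj _; rewrite Hy'rel scaler0.
have rex v : exists r : 'I_n -> R, v = \sum_i r i *: x i by apply/Hx.
exists sec; split.
  move=> b v v'; have [r ->] := rex v; have [r' ->] := rex v'.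
  by rewrite -sumZ_add !secE sumZ_add.
move=> v; have [r ->] := rex v; rewrite secE homSZ //; apply: eq_bigr => i _.
rewrite /y' (homB _ _ Hbe) Hy.
have -> : be (al (c i)) = 0 by apply/Hex; exists (c i).
by rewrite subr0.
Qed.
End FPQ.

Lemma inj_ext1 (R : pzRingType) (A C : lmodType R) :
  injective_module A -> Ext1_zero C A.
Proof.
move=> Hinj E f g [Hf Hg finj gsurj Hex].
have [r [Hr Hrf]] := Hinj A E f id Hf finj (fun a x y => erefl).
have key (e e' : E) : g e = g e' -> e - f (r e) = e' - f (r e').
  move=> Ee; have [m Em] : exists m, e - e' = f m.
    by apply/Hex; rewrite (homB _ _ Hg) Ee subrr.
  have -> : e = f m + e' by rewrite -Em subrK.
  rewrite (homD _ _ Hr) Hrf (homD _ _ Hf) opprD addrA.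
  by rewrite [f m + e']addrC addrK.
pose s c := pick 0 (fun e => g e = c) - f (r (pick 0 (fun e => g e = c))).
have sE e : s (g e) = e - f (r e).
  apply: key; apply: (@pickP _ 0 (fun e' => g e' = g e)); by exists e.
exists s; split.
  move=> a c c'; have [e <-] := gsurj c; have [e' <-] := gsurj c'.
  rewrite -Hg !sE Hr Hf scalerBr.
  by rewrite opprD addrACA.
move=> c; have [e <-] := gsurj c; rewrite sE (homB _ _ Hg).
have -> : g (f (r e)) = 0 by apply/Hex; exists (r e).
by rewrite subr0.
Qed.

Lemma img_sub (R : pzRingType) (X Y : lmodType R) (i : X -> Y) :
  is_hom i -> submod (fun y => exists x, y = i x).
Proof.
move=> Hi; split; first by exists 0; rewrite (hom0 Hi).
by move=> a y y' [x ->] [x' ->]; exists (a *: x + x'); rewrite Hi.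
Qed.

Lemma baer_inj (R : pzRingType) (A : lmodType R) : ideal_ext A -> injective_module A.
Proof.
move=> HA X Y i f Hi iinj Hf.
pose h (y : Y) := f (pick 0 (fun x => y = i x)).
have hE x : h (i x) = f x.
  rewrite /h; congr f; apply: iinj; symmetry.
  by apply: (@pickP _ 0 (fun x' => i x = i x')); exists x.
have Hh : hom_on (fun y => exists x, y = i x) h.
  by move=> a y y' [x ->] [x' ->]; rewrite -Hi !hE Hf.
have [H [HH HS]] := baer_ext HA (img_sub Hi) Hh.
by exists H; split => // x; rewrite HS ?hE //; exists x.
Qed.

Section Pairs.
Variables (R : pzRingType) (M P : lmodType R).
Lemma fst_hom a (u u' : (M * P)%type) : (a *: u + u').1 = a *: u.1 + u'.1. Proof. by []. Qed.
Lemma snd_hom a (u u' : (M * P)%type) : (a *: u + u').2 = a *: u.2 + u'.2. Proof. by []. Qed.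
Lemma pairZD a (m m' : M) (p p' : P) :
  a *: ((m, p) : (M * P)%type) + (m', p') = (a *: m + m', a *: p + p'). Proof. by []. Qed.
End Pairs.

Lemma main_ideal (R : pzRingType) (Q AI CI : (R -> Prop) -> lmodType R)
  (f : forall I, Q I -> AI I) (g : forall I, AI I -> CI I) :
  left_coherent R ->
  (forall I : R -> Prop, left_ideal I ->
     [/\ iso_quot (Q I) I, short_exact (f I) (g I),
         FP_injective (AI I) & FP_projective (CI I)]) ->
  forall A : lmodType R, FP_injective A ->
  (forall I : R -> Prop, left_ideal I -> Ext1_zero (AI I) A) -> ideal_ext A.
Proof.
move=> Hc Hyp A HA Hext I HI g0 Hg0.
have [[q [Hq1 Hq2]] [Hf Hg finj gsurj Hex] _ HCI] := Hyp I HI.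
have HIs : submod (I : R^o -> Prop).
  by case: HI => I0 ID IM; split => // a x y Ix Iy; apply: ID => //; exact: IM.
have Hh1 : hom_on (I : R^o -> Prop) (fun r : R^o => jA (g0 r)).
  by move=> a x y Ix Iy /=; rewrite -jA_hom; congr jA; exact: Hg0 a x y Ix Iy.
have [Hv [HHv HvS]] := J_inj HIs Hh1.
pose v := Hv (1 : R^o).
have Hv_r r : I r -> r *: v = jA (g0 r).
  move=> Ir; rewrite /v -(homZ _ _ HHv) -HvS //.
  by congr Hv; exact: mulr1.
pose Hj := @jA_hom R A.
have HN : FP_injective (quotT (imgj_sub Hj)) := fpinjN Hc HA (@jA_inj R A) (@J_inj R A).
have HS' := img_sub Hf.
pose hq (x : AI I) := (mkQ (imgj_sub Hj)) (pick 0 (fun r => x = f I (r *: q)) *: v).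
have hqE r : hq (f I (r *: q)) = (mkQ (imgj_sub Hj)) (r *: v).
  rewrite /hq; set r' := pick _ _.
  have Er : f I (r *: q) = f I (r' *: q).
    by apply: (@pickP _ 0 (fun r0 => f I (r *: q) = f I (r0 *: q))); exists r.
  have Ir : I (r' - r) by apply/Hq1; rewrite scalerBl -(finj _ _ Er) subrr.
  apply/(mkQ_eq (imgj_sub Hj)); rewrite -scalerBl Hv_r //; by exists (g0 (r' - r)).
have Hhq : hom_on (fun x => exists y, x = f I y) hq.
  move=> a x x' [y ->] [y' ->]; have [r ->] := Hq2 y; have [r' ->] := Hq2 y'.
  rewrite -Hf scalerA -scalerDl !hqE -(mkQ_hom (imgj_sub Hj)).
  by congr (mkQ (imgj_sub Hj)); rewrite scalerDl scalerA.
have [psi [Hpsi psiE]] := ext_hom HS' (HCI _ HN) Hg gsurj Hex Hhq.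
pose SPB (p : (AI I * JT A)%type) := psi p.1 = (mkQ (imgj_sub Hj)) p.2.
have HSPB : submod SPB.
  split; first by rewrite /SPB /= (hom0 Hpsi) (hom0 (mkQ_hom _)).
  move=> a p p' Hp Hp'; rewrite /SPB fst_hom snd_hom Hpsi Hp Hp'.
  by rewrite (mkQ_hom (imgj_sub Hj)).
have fok a : SPB ((0, jA a) : (AI I * JT A)%type).
  rewrite /SPB /= (hom0 Hpsi); symmetry; apply/(mkQ0 (imgj_sub Hj)); by exists a.
pose fE' (a : A) : subT HSPB := mkS HSPB (fok a).
pose gE' (e : subT HSPB) : AI I := (sv e).1.
have se' : short_exact fE' gE'.
  split.
  - move=> a x y; apply: sv_inj; rewrite sv_hom /= pairZD jA_hom.
    by rewrite scaler0 addr0.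
  - by move=> a x y; rewrite /gE' sv_hom.
  - by move=> a a' /(congr1 (fun e => (sv e).2)) /= /jA_inj.
  - move=> x; have [w Hw] := mkQ_surj (psi x).
    have Sx : SPB ((x, w) : (AI I * JT A)%type) by [].
    by exists (mkS HSPB Sx).
  - move=> e; split.
    + rewrite /gE' => e1; have := svP e; rewrite /SPB e1 (hom0 Hpsi) => /esym /(mkQ0 (imgj_sub Hj)).
      move=> [a Ea]; exists a; apply: sv_inj; rewrite /=.
      by move: e1 Ea; case: (sv e) => x w /= -> ->.
    + by move=> [a ->].
have [sg [Hsg Hsgs]] := Hext I HI _ fE' gE' se'.
pose s2 x := (sv (sg x)).2.
have Hs2 : is_hom s2 by move=> a x y; rewrite /s2 Hsg.
have s2E x : (mkQ (imgj_sub Hj)) (s2 x) = psi x.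
  have := svP (sg x); rewrite /SPB => <-.
  by have := Hsgs x; rewrite /gE' => ->.
pose w := v - s2 (f I q).
have [a0 Ea0] : imgj (@jA R A) w.
  apply/(mkQ0 (imgj_sub Hj)); rewrite /w (homB _ _ (mkQ_hom _)) s2E.
  rewrite psiE; last by exists q.
  by rewrite -[q]scale1r hqE scale1r subrr.
exists a0 => r Ir; apply: jA_inj; rewrite (homZ _ _ Hj) -Ea0 /w scalerBr Hv_r //.
rewrite -(homZ _ _ Hs2) -(homZ _ _ Hf) (proj2 (Hq1 r) Ir) (hom0 Hf) (hom0 Hs2).
by rewrite subr0.
Qed.

Unset Implicit Arguments.
Local Close Scope ring_scope.

Theorem lemma3p4 (R : pzRingType)
  (Q AI CI : (R -> Prop) -> lmodType R)
  (f : forall I, Q I -> AI I) (g : forall I, AI I -> CI I) :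
  left_coherent R ->
  (forall I : R -> Prop, left_ideal I ->
     [/\ iso_quot (Q I) I, short_exact (f I) (g I),
         FP_injective (AI I) & FP_projective (CI I)]) ->
  forall A : lmodType R, FP_injective A ->
    (injective_module A <->
     (forall I : R -> Prop, left_ideal I -> Ext1_zero (AI I) A)).
Proof.
move=> Hc Hyp A HA; split.
  by move=> Hinj I HI; apply: inj_ext1.
by move=> Hext; apply: baer_inj; exact: (main_ideal Hc Hyp HA Hext).
Qed.
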